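(* Let $n,k,d$ be integers with $1\le k\le d<n$, let $\alpha,\gamma>0$, and let $j$ be an integer with $0\le j\le k-1$. Then $$C^{\mathrm{exact}}_{n,k,d}(\alpha,\gamma)\ \ge\ \frac{n}{n-j}\, C^{\mathrm{exact}}_{n-j,k-j,d-j}(\alpha,\gamma).$$
   Context: A distributed storage system (DSS) with parameters $(n,k,d)$ stores a file across $n$ nodes, each storing an amount $\alpha$ of information (e.g. $\alpha$ symbols over a finite field, where symbols may be split into arbitrarily many sub-symbols), such that the file can be reconstructed from the contents of any $k$ nodes, and any lost node can be repaired by contacting any $d$ of the remaining nodes, each of which transmits an amount $\beta$ to the replacement node, for a total repair bandwidth $\gamma=d\beta$. Repair is exact: the replacement node stores exactly the same content as the lost node. $C^{\mathrm{exact}}_{n,k,d}(\alpha,\gamma)$ denotes the maximum size of a file that can be stored by such an exact-repair DSS with $n$ nodes, node size $\alpha$ and total repair bandwidth $\gamma$. *)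

(* Defs.v *)
From HB Require Import structures.
From mathcomp Require Import all_boot all_order all_algebra.
From mathcomp Require Import all_classical all_reals.
Set Implicit Arguments. Unset Strict Implicit. Unset Printing Implicit Defensive.
Import Order.TTheory GRing.Theory Num.Theory.
Local Open Scope ring_scope.

(* q is the size of a finite field: a prime power. *)
Definition prime_power (q : nat) : Prop :=
  exists p e : nat, prime p /\ (0 < e)%N /\ q = (p ^ e)%N.

(* An exact-repair DSS with parameters (n,k,d) over an alphabet of q symbols:
   the file is B symbols, every node stores a symbols, every helper sends
   b symbols.  Encoding/decoding/repair functions are arbitrary (non-linear
   codes allowed).
   - reconstruction: from the contents of any k nodes the file is recovered;
   - exact repair: for any lost node i and any set H of d other nodes, each
     helper j in H sends a function h j of its own content, and from these
     messages the content of node i is reproduced exactly. *)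
Definition is_exact_DSS (n k d q B a b : nat) : Prop :=
  exists enc : 'I_n -> {ffun 'I_B -> 'I_q} -> {ffun 'I_a -> 'I_q},
    (forall S : {set 'I_n}, #|S| = k ->
       exists dec : {ffun 'I_n -> {ffun 'I_a -> 'I_q}} -> {ffun 'I_B -> 'I_q},
         forall (f : {ffun 'I_B -> 'I_q}) (y : {ffun 'I_n -> {ffun 'I_a -> 'I_q}}),
           (forall i, i \in S -> y i = enc i f) -> dec y = f)
    /\
    (forall (i : 'I_n) (H : {set 'I_n}), #|H| = d -> i \notin H ->
       exists (h : 'I_n -> {ffun 'I_a -> 'I_q} -> {ffun 'I_b -> 'I_q})
              (rep : {ffun 'I_n -> {ffun 'I_b -> 'I_q}} -> {ffun 'I_a -> 'I_q}),
         forall (f : {ffun 'I_B -> 'I_q}) (m : {ffun 'I_n -> {ffun 'I_b -> 'I_q}}),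
           (forall j, j \in H -> m j = h j (enc j f)) -> rep m = enc i f).

(* Achievable normalized file sizes: each field symbol is split into L
   sub-symbols, so the file has size B/L, nodes store a/L <= alpha and
   each of the d helpers sends b/L <= beta = gamma/d. *)
Definition achievable_sizes (R : realType) (n k d : nat) (alpha gamma : R) : set R :=
  [set x | exists q L B a b : nat,
      prime_power q /\ (0 < L)%N /\
      a%:R / L%:R <= alpha /\
      b%:R / L%:R <= gamma / d%:R /\
      is_exact_DSS n k d q B a b /\
      x = B%:R / L%:R].

Definition C_exact (R : realType) (n k d : nat) (alpha gamma : R) : R :=
  sup (achievable_sizes n k d alpha gamma).

(* Main.v *)
Require Import Defs.
From HB Require Import structures.
From mathcomp Require Import all_boot all_order all_algebra.
From mathcomp Require Import all_classical all_reals.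
Import Order.TTheory GRing.Theory Num.Theory.
Local Open Scope ring_scope.
From mathcomp Require Import fingroup perm.
From mathcomp Require Import zify.
From mathcomp.algebra_tactics Require Import ring lra.
Import Order.TTheory GRing.Theory Num.Theory.
Set Implicit Arguments. Unset Strict Implicit. Unset Printing Implicit Defensive.
Local Close Scope ring_scope.
Definition embed (T U : finType) (TS : {set T}) (US : {set U}) (u0 : U) (x : T) : U :=
  nth u0 (enum US) (index x (enum TS)).

Lemma embed_inj (T U : finType) (TS : {set T}) (US : {set U}) (u0 : U) :
  (#|TS| <= #|US|)%N -> {in TS &, injective (embed TS US u0)}.
Proof.
move=> le x y xT yT; rewrite /embed => /eqP.
have hx : (index x (enum TS) < size (enum US))%N.
  by rewrite -cardE (leq_trans _ le) // cardE index_mem mem_enum.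
have hy : (index y (enum TS) < size (enum US))%N.
  by rewrite -cardE (leq_trans _ le) // cardE index_mem mem_enum.
rewrite nth_uniq ?enum_uniq // => /eqP e.
have xe : x \in enum TS by rewrite mem_enum.
have ye : y \in enum TS by rewrite mem_enum.
by rewrite -(nth_index x xe) e nth_index.
Qed.

Lemma embed_mem (T U : finType) (TS : {set T}) (US : {set U}) (u0 : U) x :
  (#|TS| <= #|US|)%N -> x \in TS -> embed TS US u0 x \in US.
Proof.
move=> le xT; rewrite /embed -mem_enum mem_nth //.
by rewrite -cardE (leq_trans _ le) // cardE index_mem mem_enum.
Qed.

Lemma card_qffun q a : #|{ffun 'I_a -> 'I_q}| = (q ^ a)%N.
Proof. by rewrite card_ffun !card_ord. Qed.

Lemma transfer n k d q B a b (F A M : finType) (FS : {set F}) (enc : 'I_n -> F -> A)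
  (AS : 'I_n -> {set A}) :
  (0 < q)%N ->
  (q ^ B <= #|FS|)%N ->
  (forall i, #|AS i| <= q ^ a)%N ->
  (forall i f, f \in FS -> enc i f \in AS i) ->
  (forall S : {set 'I_n}, #|S| = k -> forall f g, f \in FS -> g \in FS ->
     (forall i, i \in S -> enc i f = enc i g) -> f = g) ->
  (forall (i : 'I_n) (H : {set 'I_n}), #|H| = d -> i \notin H ->
     exists (h : 'I_n -> A -> M) (MS : 'I_n -> {set M}),
       (forall j, j \in H -> #|MS j| <= q ^ b)%N /\
       (forall j f, j \in H -> f \in FS -> h j (enc j f) \in MS j) /\
       (forall f g, f \in FS -> g \in FS ->
          (forall j, j \in H -> h j (enc j f) = h j (enc j g)) -> enc i f = enc i g)) ->
  is_exact_DSS n k d q B a b.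
Proof.
move=> q0 hF hA encA rec rep.
pose o : 'I_q := Ordinal q0.
pose fq0 : {ffun 'I_B -> 'I_q} := [ffun => o].
pose aq0 : {ffun 'I_a -> 'I_q} := [ffun => o].
pose mq0 : {ffun 'I_b -> 'I_q} := [ffun => o].
have [f0 f0F] : exists f0, f0 \in FS.
  by apply/set0Pn; rewrite -card_gt0 (leq_trans _ hF) // expn_gt0 q0.
have leF : (#|[set: {ffun 'I_B -> 'I_q}]| <= #|FS|)%N by rewrite cardsT card_qffun.
pose iF := embed [set: {ffun 'I_B -> 'I_q}] FS f0.
have iFinj : injective iF by move=> x y; apply: (embed_inj leF); rewrite inE.
have iFS x : iF x \in FS by apply: embed_mem; rewrite ?inE.
have leA i : (#|AS i| <= #|[set: {ffun 'I_a -> 'I_q}]|)%N by rewrite cardsT card_qffun.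
pose iA i := embed (AS i) [set: {ffun 'I_a -> 'I_q}] aq0.
pose encq i x := iA i (enc i (iF x)).
exists encq; split.
  move=> S hS.
  exists (fun y => odflt fq0 [pick x | [forall i in S, y i == encq i x]]).
  move=> f y hy; case: pickP => [x /forallP /= hx | /(_ f) /forallP []] /=; last first.
    by move=> i; apply/implyP => iS; rewrite hy.
  apply: iFinj; apply: (rec S) => // i iS.
  apply: (embed_inj (u0:=aq0) (leA i)); rewrite ?encA //.
  by move: (hx i); rewrite iS hy //= => /eqP.
move=> i H hH iH; have [h [MS [hM [hMS hrep]]]] := rep i H hH iH.
have leM j : j \in H -> (#|MS j| <= #|[set: {ffun 'I_b -> 'I_q}]|)%N.
  by move=> jH; rewrite cardsT card_qffun hM.
pose kM j := embed (MS j) [set: {ffun 'I_b -> 'I_q}] mq0.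
exists (fun j y => if [pick x in AS j | iA j x == y] is Some x then kM j (h j x) else mq0).
exists (fun m => odflt aq0 (omap (encq i)
   [pick x | [forall j in H, m j == kM j (h j (enc j (iF x)))]])).
have key j x : (if [pick x0 in AS j | iA j x0 == encq j x] is Some x0 then kM j (h j x0) else mq0)
   = kM j (h j (enc j (iF x))).
  case: pickP => [x0 /andP [x0A /eqP e] | /(_ (enc j (iF x)))]; last by rewrite encA //= eqxx.
  by rewrite (embed_inj (leA j) x0A (encA _ _ (iFS x)) e).
move=> f m hm; case: pickP => [x /forallP /= hx | /(_ f) /forallP []] /=; last first.
  by move=> j; apply/implyP => jH; rewrite hm // key.
rewrite /encq; congr (iA i _); apply: hrep => // j jH.
apply: (embed_inj (u0:=mq0) (leM j jH)); rewrite ?hMS //.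
by move: (hx j); rewrite jH hm //= key => /eqP.
Qed.
Definition Qsel (T : finType) (r : nat) (P : {set T}) : {set T} := [set x in take r (enum P)].

Lemma Qsel_sub (T : finType) r (P : {set T}) : Qsel r P \subset P.
Proof. by apply/fintype.subsetP => x; rewrite inE => /mem_take; rewrite mem_enum. Qed.

Lemma Qsel_card (T : finType) r (P : {set T}) : (r <= #|P|)%N -> #|Qsel r P| = r.
Proof.
move=> le; rewrite /Qsel cardsE; move/card_uniqP: (take_uniq r (enum_uniq (mem P))) => ->.
by rewrite size_takel // -cardE.
Qed.

Definition Ci m n (i : 'I_n) := [set c : {ffun 'I_m -> 'I_n} | injectiveb c && [exists p, c p == i]].
Definition Cinj m n := [set c : {ffun 'I_m -> 'I_n} | injectiveb c].
Definition tact m n (g : {perm 'I_n}) (c : {ffun 'I_m -> 'I_n}) : {ffun 'I_m -> 'I_n} :=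
  [ffun p => g (c p)].

Lemma tact_inj m n (g : {perm 'I_n}) : injective (@tact m n g).
Proof.
move=> c1 c2 e; apply/ffunP => p.
by move/ffunP: e => /(_ p); rewrite !ffunE => /perm_inj.
Qed.

Lemma tact_injb m n (g : {perm 'I_n}) (c : {ffun 'I_m -> 'I_n}) : injectiveb c -> injectiveb (@tact m n g c).
Proof.
move/injectiveP => ic; apply/injectiveP => p1 p2; rewrite !ffunE => /perm_inj; exact: ic.
Qed.

Lemma Ci_le m n (i i' : 'I_n) : (#|Ci m i| <= #|Ci m i'|)%N.
Proof.
rewrite -(card_imset _ (@tact_inj m n (tperm i i'))); apply: subset_leq_card.
apply/fintype.subsetP => y /imsetP [c]; rewrite !inE => /andP [ic /existsP [p /eqP cp]] ->.
rewrite tact_injb //=; apply/existsP; exists p; by rewrite ffunE cp tpermL.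
Qed.

Lemma Ci_card m n (i i' : 'I_n) : #|Ci m i| = #|Ci m i'|.
Proof. by apply/eqP; rewrite eqn_leq !Ci_le. Qed.

Lemma sum_Ci m n : \sum_(i : 'I_n) #|Ci m i| = (m * #|Cinj m n|)%N.
Proof.
have e i : #|Ci m i| = \sum_(c in Cinj m n) ([exists p, c p == i] : nat).
  rewrite -sum1_card big_mkcond [RHS]big_mkcond /=; apply: eq_bigr => c _.
  by rewrite !inE; case: injectiveb; case: [exists p, _].
rewrite (eq_bigr _ (fun i _ => e i)) exchange_big /= mulnC -sum_nat_const.
apply: eq_bigr => c; rewrite inE => /injectiveP ic.
transitivity #|c @: [set: 'I_m]|; last by rewrite card_imset // cardsT card_ord.
rewrite -sum1_card [RHS]big_mkcond /=; apply: eq_bigr => i _.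
case: (boolP [exists p, _]) => [/existsP [p /eqP <-] | /existsPn np]; first by rewrite imset_f.
case: imsetP => // [[p _ e1]]; by move: (np p); rewrite e1 eqxx.
Qed.

Definition Pset m n (H : {set 'I_n}) (c : {ffun 'I_m -> 'I_n}) := [set p | c p \in H].
Definition Dset m n r (i : 'I_n) (H : {set 'I_n}) (j : 'I_n) :=
  [set c in Ci m i | [exists p in Qsel r (Pset H c), c p == j]].

Lemma tperm_H n (H : {set 'I_n}) j j' x : j \in H -> j' \in H -> (tperm j j' x \in H) = (x \in H).
Proof.
move=> jH j'H; case: (tpermP j j' x) => [-> | -> | /eqP a /eqP b]; rewrite ?jH ?j'H //.
Qed.

Lemma Dset_le m n r i (H : {set 'I_n}) j j' : i \notin H -> j \in H -> j' \in H ->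
  (#|Dset m r i H j| <= #|Dset m r i H j'|)%N.
Proof.
move=> iH jH j'H.
rewrite -(card_imset _ (@tact_inj m n (tperm j j'))); apply: subset_leq_card.
apply/fintype.subsetP => y /imsetP [c]; rewrite !inE => /andP [/andP [ic /existsP [p /eqP cp]]].
have eP : Pset H (tact (tperm j j') c) = Pset H c.
  by apply/setP => x; rewrite !inE ffunE tperm_H.
move=> /existsP [p' /andP [p'Q /eqP cp']] ->.
rewrite tact_injb //= eP; apply/andP; split.
  apply/existsP; exists p; rewrite ffunE cp tpermD //.
    by apply: contraNneq iH => <-.
  by apply: contraNneq iH => <-.
apply/existsP; exists p'; rewrite ffunE cp' tpermL p'Q eqxx.
by [].

Qed.

Lemma Dset_card m n r i (H : {set 'I_n}) j j' : i \notin H -> j \in H -> j' \in H ->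
  #|Dset m r i H j| = #|Dset m r i H j'|.
Proof. by move=> *; apply/eqP; rewrite eqn_leq !Dset_le. Qed.

Lemma sum_Dset m n r i (H : {set 'I_n}) :
  (forall c, c \in Ci m i -> r <= #|Pset H c|)%N ->
  \sum_(j in H) #|Dset m r i H j| = (r * #|Ci m i|)%N.
Proof.
move=> hP.
have e j : #|Dset m r i H j| = \sum_(c in Ci m i) ([exists p in Qsel r (Pset H c), c p == j] : nat).
  rewrite -sum1_card big_mkcond [RHS]big_mkcond /=; apply: eq_bigr => c _.
  by rewrite !inE; case: (injectiveb c && [exists p, c p == i]) => //=; case: [exists p in _, _].
rewrite (eq_bigr _ (fun j _ => e j)) exchange_big /= mulnC -sum_nat_const.
apply: eq_bigr => c cC; have /andP [/injectiveP ic _] : injectiveb c && [exists p, c p == i].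
  by move: cC; rewrite inE.
transitivity #|c @: Qsel r (Pset H c)|; last by rewrite card_imset // Qsel_card // hP.
rewrite -sum1_card [RHS]big_mkcond /= big_mkcond /=; apply: eq_bigr => j _.
case: (boolP (j \in c @: Qsel r (Pset H c))) => [/imsetP [p pQ ->] | nim].
  have := fintype.subsetP (Qsel_sub r (Pset H c)) p pQ; rewrite inE => ->.
  have -> // : [exists p0 in Qsel r (Pset H c), c p0 == c p].
  by apply/existsP; exists p; rewrite pQ eqxx.
case: (j \in H) => //; case: existsP => // [[p /andP [pQ /eqP e2]]].
by move/negP: nim; case; rewrite -e2 imset_f.
Qed.
Lemma card_dflt (T U : finType) (D : {set T}) (u0 : U) :
  #|[set f : {ffun T -> U} | [forall x, (x \notin D) ==> (f x == u0)]]| = (#|U| ^ #|D|)%N.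
Proof.
rewrite -cardsT -(card_pffun_on u0 D [set: U]); apply: eq_card => f; rewrite inE.
apply/forallP/pffun_onP => [h | [h _] x]; last first.
  apply/implyP => xD; apply: contraR xD => fx.
  by apply: (fintype.subsetP h); rewrite inE.
split; last by move=> y _; rewrite inE.
apply/fintype.subsetP => x; rewrite inE => fx; move: (h x); apply: contraLR => xD.
by rewrite xD.
Qed.

Lemma pick_uniq (T : finType) (P : pred T) p : P p -> (forall p', P p' -> p' = p) -> pick P = Some p.
Proof. by move=> Pp u; case: pickP => [p' /u -> // | /(_ p)]; rewrite Pp. Qed.

Lemma Pset_card m n (H : {set 'I_n}) (c : {ffun 'I_m -> 'I_n}) :
  injectiveb c -> (#|H| + m <= #|Pset H c| + n)%N.
Proof.
move/injectiveP => ic.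
have le : (#|~: Pset H c| <= #|~: H|)%N.
  rewrite -(card_imset _ ic); apply: subset_leq_card; apply/fintype.subsetP => y /imsetP [p].
  by rewrite !inE => pH ->.
have e1 := cardsC (Pset H c); have e2 := cardsC H; rewrite card_ord in e1; rewrite card_ord in e2.
lia.
Qed.

Lemma core q n m k k0 d d0 B a b (i0 : 'I_n) :
  (0 < q)%N -> (m <= n)%N -> (k0 + n <= k + m)%N -> (d0 + n <= d + m)%N ->
  is_exact_DSS m k0 d0 q B a b ->
  is_exact_DSS n k d q (B * #|Cinj m n|) (a * #|Ci m i0|) (b * (d0 * #|Ci m i0| %/ d)).
Proof.
move=> q0 mn hk hd [enc0 [rec0 rep0]].
have rec0' (S : {set 'I_m}) (hS : #|S| = k0) f g : (forall p, p \in S -> enc0 p f = enc0 p g) -> f = g.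
  have [dec hdec] := rec0 S hS => e.
  rewrite -(hdec f [ffun p => enc0 p f]) ?(hdec g) // => p pS; rewrite ffunE ?e //.
have rep0' p (Q : {set 'I_m}) (hQ : #|Q| = d0) (pQ : p \notin Q) : exists h0 : 'I_m -> {ffun 'I_a -> 'I_q} -> {ffun 'I_b -> 'I_q},
    forall f g, (forall p', p' \in Q -> h0 p' (enc0 p' f) = h0 p' (enc0 p' g)) -> enc0 p f = enc0 p g.
  have [h0 [rp hrp]] := rep0 p Q hQ pQ; exists h0 => f g e.
  rewrite -(hrp f [ffun p' => h0 p' (enc0 p' f)]) ?(hrp g) // => p' p'Q; rewrite ffunE ?e //.
pose o : 'I_q := Ordinal q0.
pose fq0 : {ffun 'I_B -> 'I_q} := [ffun => o].
pose aq0 : {ffun 'I_a -> 'I_q} := [ffun => o].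
pose mq0 : {ffun 'I_b -> 'I_q} := [ffun => o].
pose FS := [set f : {ffun {ffun 'I_m -> 'I_n} -> {ffun 'I_B -> 'I_q}} |
             [forall c, (c \notin Cinj m n) ==> (f c == fq0)]].
pose AS (i : 'I_n) := [set x : {ffun {ffun 'I_m -> 'I_n} -> {ffun 'I_a -> 'I_q}} |
             [forall c, (c \notin Ci m i) ==> (x c == aq0)]].
pose enc (i : 'I_n) (f : {ffun {ffun 'I_m -> 'I_n} -> {ffun 'I_B -> 'I_q}}) :=
  [ffun c : {ffun 'I_m -> 'I_n} => if injectiveb c then
     (if [pick p | c p == i] is Some p then enc0 p (f c) else aq0) else aq0].
have encP i f (c : {ffun 'I_m -> 'I_n}) p : injectiveb c -> c p = i -> enc i f c = enc0 p (f c).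
  move=> ic cp; rewrite ffunE ic (@pick_uniq _ _ p) //; first by rewrite cp.
  by move=> p' /eqP; rewrite -cp; move/injectiveP: ic; apply.
apply: (@transfer n k d q _ _ _ _ _ _ FS enc AS) => //.
- by rewrite card_dflt card_qffun expnM.
- by move=> i; rewrite card_dflt card_qffun expnM (Ci_card m i i0).
- move=> i f fF; rewrite inE; apply/forallP => c; apply/implyP; rewrite ffunE inE.
  case: (injectiveb c) => //=; case: pickP => //= p cp /existsP []; by exists p.
- move=> S hS f g fF gF e; apply/ffunP => c.
  case ic: (injectiveb c); last first.
    move: fF gF; rewrite !inE => /forallP /(_ c) + /forallP /(_ c).
    by rewrite inE ic /= => /eqP -> /eqP ->.
  have hR : (k0 <= #|Pset S c|)%N by have := Pset_card S ic; rewrite hS; lia.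
  apply: (rec0' _ (Qsel_card hR)) => p pQ.
  have := fintype.subsetP (Qsel_sub k0 (Pset S c)) p pQ; rewrite inE => cpS.
  by rewrite -(encP (c p) f c p ic) // -(encP (c p) g c p ic) // e.
move=> i H hH iH.
pose Q (c : {ffun 'I_m -> 'I_n}) := Qsel d0 (Pset H c).
have hQ c : c \in Ci m i -> #|Q c| = d0.
  rewrite inE => /andP [ic _]; apply: Qsel_card; have := Pset_card H ic; rewrite hH; lia.
have : forall c : {ffun 'I_m -> 'I_n}, exists h0 : 'I_m -> {ffun 'I_a -> 'I_q} -> {ffun 'I_b -> 'I_q},
   forall p, injectiveb c -> c p = i -> forall fc gc,
     (forall p', p' \in Q c -> h0 p' (enc0 p' fc) = h0 p' (enc0 p' gc)) -> enc0 p fc = enc0 p gc.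
  move=> c; case: (boolP [exists p, injectiveb c && (c p == i)]) => [/existsP [p /andP [ic /eqP cp]] | none].
    have cC : c \in Ci m i by rewrite inE ic; apply/existsP; exists p; rewrite cp.
    have pQ : p \notin Q c.
      apply/negP => /(fintype.subsetP (Qsel_sub d0 (Pset H c))); rewrite inE cp.
      by apply/negP.
    have [h0 hh0] := rep0' p (Q c) (hQ c cC) pQ.
    exists h0 => p' ic' cp'; have -> : p' = p by move/injectiveP: ic => ic1; apply: ic1; rewrite cp cp'.
    exact: hh0.
  exists (fun _ _ => mq0) => p ic cp; move/existsPn: none => /(_ p); by rewrite ic cp eqxx.
case/fin_all_exists => hh hhP.
pose h (j : 'I_n) (x : {ffun {ffun 'I_m -> 'I_n} -> {ffun 'I_a -> 'I_q}}) :=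
  [ffun c : {ffun 'I_m -> 'I_n} => if c \in Ci m i then
     (if [pick p in Q c | c p == j] is Some p then hh c p (x c) else mq0) else mq0].
pose MS (j : 'I_n) := [set y : {ffun {ffun 'I_m -> 'I_n} -> {ffun 'I_b -> 'I_q}} |
             [forall c, (c \notin Dset m d0 i H j) ==> (y c == mq0)]].
have hP c : c \in Ci m i -> (d0 <= #|Pset H c|)%N.
  rewrite inE => /andP [ic _]; have := Pset_card H ic; rewrite hH; lia.
have hD j : j \in H -> #|Dset m d0 i H j| = (d0 * #|Ci m i0| %/ d)%N.
  move=> jH; have := sum_Dset hP.
  rewrite (eq_bigr _ (fun j' j'H => Dset_card m d0 iH j'H jH)) sum_nat_const hH (Ci_card m i i0).
  move=> <-; rewrite mulKn //; apply: (leq_trans _ (eq_leq hH)); rewrite card_gt0; apply/set0Pn.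
  by exists j.
have hpQ (c : {ffun 'I_m -> 'I_n}) p j : injectiveb c -> c p = j -> p \in Q c -> [pick p0 in Q c | c p0 == j] = Some p.
  move=> ic cp pQ; apply: pick_uniq; first by rewrite pQ cp eqxx.
  by move=> p' /andP [_ /eqP]; rewrite -cp; move/injectiveP: ic; apply.
exists h, MS; split; [|split].
- by move=> j jH; rewrite card_dflt card_qffun expnM hD.
- move=> j f jH fF; rewrite inE; apply/forallP => c; apply/implyP; rewrite ffunE inE.
  case: (c \in Ci m i) => //=; case: pickP => //= p /andP [pQ cp] /existsP []; exists p.
  by rewrite pQ.
move=> f g fF gF e; apply/ffunP => c; rewrite !ffunE.
case ic: (injectiveb c) => //; case: pickP => // p /eqP cp.
have cC : c \in Ci m i by rewrite inE ic; apply/existsP; exists p; rewrite cp.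
apply: (hhP c p ic cp) => p' p'Q.
have := fintype.subsetP (Qsel_sub d0 (Pset H c)) p' p'Q; rewrite inE => cpH.
move: (e _ cpH) => /ffunP /(_ c); rewrite !ffunE cC (hpQ c p' (c p')) //.
rewrite ic (@pick_uniq _ _ p') // => p'' /eqP; move/injectiveP: ic; apply.
Qed.
Local Open Scope ring_scope.
Lemma ffun_I0 (T : Type) (f g : {ffun 'I_0 -> T}) : f = g.
Proof. by apply/ffunP => -[x hx]. Qed.

Lemma trivial_dss n k d : is_exact_DSS n k d 2 0 0 0.
Proof.
exists (fun _ _ => [ffun x : 'I_0 => ord0]); split.
  by move=> S _; exists (fun _ => [ffun x : 'I_0 => ord0]) => f y _; apply: ffun_I0.
move=> i H _ _; exists (fun _ _ => [ffun x : 'I_0 => ord0]), (fun _ => [ffun x : 'I_0 => ord0]).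
by move=> f m _; apply: ffun_I0.
Qed.

Lemma pp_gt1 q : prime_power q -> (1 < q)%N.
Proof.
move=> [p [e [pp [e0 ->]]]]; apply: (leq_trans (prime_gt1 pp)).
by rewrite -{1}(expn1 p) leq_pexp2l // prime_gt0.
Qed.

Lemma dss_bound n k d q B a b : (1 < q)%N -> (k <= n)%N -> is_exact_DSS n k d q B a b ->
  (B <= a * n)%N.
Proof.
move=> q1 kn [enc [rec _]].
have hS : #|Qsel k [set: 'I_n]| = k by rewrite Qsel_card // cardsT card_ord.
have [dec hdec] := rec _ hS.
have inj : injective (fun f : {ffun 'I_B -> 'I_q} => [ffun i => enc i f]).
  move=> f g e; rewrite -(hdec f [ffun i => enc i f]); last by move=> i _; rewrite ffunE.
  by rewrite e; apply: hdec => i _; rewrite ffunE.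
have := @leq_card _ _ _ inj; rewrite card_qffun card_ffun card_qffun card_ord -expnM.
by rewrite leq_exp2l.
Qed.

Lemma ach_ub (R : realType) n k d (alpha gamma : R) : (k <= n)%N ->
  ubound (achievable_sizes n k d alpha gamma) (n%:R * alpha).
Proof.
move=> kn x [q [L [B [a [b [pq [L0 [ha [hb [dss ->]]]]]]]]]].
have hB := dss_bound (pp_gt1 pq) kn dss.
have L0' : (0 : R) < L%:R by rewrite ltr0n.
rewrite ler_pdivrMr //; rewrite ler_pdivrMr // in ha.
have : (B%:R : R) <= a%:R * n%:R by rewrite -natrM ler_nat.
have : (0 : R) <= n%:R by [].
nra.
Qed.

Lemma ach_0 (R : realType) n k d (alpha gamma : R) : 0 <= alpha -> 0 <= gamma ->
  achievable_sizes n k d alpha gamma 0.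
Proof.
move=> a0 g0; exists 2%N, 1%N, 0%N, 0%N, 0%N; split.
  by exists 2%N, 1%N.
split; first by []. split; first by rewrite mul0r.
split; first by rewrite mul0r divr_ge0.
split; last by rewrite mul0r.
exact: trivial_dss.
Qed.

Unset Implicit Arguments.
Theorem theorem3p1 (R : realType) (n k d j : nat) (alpha gamma : R) :
  (1 <= k)%N -> (k <= d)%N -> (d < n)%N ->
  0 < alpha -> 0 < gamma ->
  (j <= k - 1)%N ->
  n%:R / (n - j)%:R * C_exact (n - j) (k - j) (d - j) alpha gamma
    <= C_exact n k d alpha gamma.
Proof.
move=> k1 kd dn a0 g0 jk.
have n0 : (0 < n)%N by lia.
pose i0 : 'I_n := Ordinal n0.
pose N := #|Cinj (n - j) n|; pose cnt := #|Ci (n - j) i0|.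
have hNC : (n * cnt = (n - j) * N)%N.
  rewrite -sum_Ci (eq_bigr _ (fun i _ => Ci_card (n - j) i i0)) sum_nat_const card_ord.
  by [].
have N0 : (0 < N)%N.
  rewrite card_gt0; apply/set0Pn; exists [ffun p : 'I_(n - j) => widen_ord (leq_subr j n) p].
  rewrite inE; apply/injectiveP => p1 p2; rewrite !ffunE => /(congr1 val) /= e; exact: val_inj.
have m0 : (0 < n - j)%N by lia.
have cnt0 : (0 < cnt)%N.
  have : (0 < n * cnt)%N by rewrite hNC muln_gt0 m0 N0.
  by rewrite muln_gt0 => /andP [].
set S := achievable_sizes n k d alpha gamma.
set S' := achievable_sizes (n - j) (k - j) (d - j) alpha gamma.
have hS : has_sup S.
  split; first by exists 0; apply: ach_0; apply: ltW.
  exists (n%:R * alpha); apply: ach_ub; lia.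
have mR : (0 : R) < (n - j)%:R by rewrite ltr0n.
have nR : (0 : R) < n%:R by rewrite ltr0n.
have key x : S' x -> S (n%:R / (n - j)%:R * x).
  move=> [q [L [B [a [b [pq [L0 [ha [hb [dss ->]]]]]]]]]].
  have q0 : (0 < q)%N by have := pp_gt1 pq; lia.
  have hk : (k - j + n <= k + (n - j))%N by lia.
  have hd : (d - j + n <= d + (n - j))%N by lia.
  have dss' := core i0 q0 (leq_subr j n) hk hd dss.
  exists q, (L * cnt)%N, (B * N)%N, (a * cnt)%N, (b * ((d - j) * cnt %/ d))%N.
  have LR : (0 : R) < L%:R by rewrite ltr0n.
  have cR : (0 : R) < cnt%:R by rewrite ltr0n.
  split; first by [].
  split; first by rewrite muln_gt0 L0 cnt0.
  split.
    rewrite !natrM (_ : _ / _ = a%:R / L%:R) //; field.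
    by apply/andP; split; rewrite lt0r_neq0.
  split.
    rewrite !natrM ler_pdivrMr ?mulr_gt0 // mulrAC ler_pdivlMr ?ltr0n; last by lia.
    rewrite ler_pdivrMr // mulrAC ler_pdivlMr ?ltr0n in hb; last by lia.
    have hl : ((d - j) * cnt %/ d * d <= (d - j) * cnt)%N by apply: leq_trunc_div.
    have hl' : ((d - j) * cnt %/ d)%:R * d%:R <= (d - j)%:R * cnt%:R :> R.
      by rewrite -!natrM ler_nat.
    have : (0 : R) <= b%:R by [].
    have : (0 : R) <= cnt%:R by [].
    nra.
  split; first exact: dss'.
  have eN : (N%:R : R) = n%:R * cnt%:R / (n - j)%:R.
    apply: (mulIf (lt0r_neq0 mR)); rewrite divfK ?lt0r_neq0 // -!natrM mulnC hNC.
    by rewrite mulnC.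
  rewrite !natrM eN; field.
  by rewrite !lt0r_neq0.
have hS' : (S' !=set0)%classic.
  by exists 0; apply: ach_0; apply: ltW.
have le1 : sup S' <= (n - j)%:R / n%:R * sup S.
  apply: ge_sup => // x Sx.
  have : x = (n - j)%:R / n%:R * (n%:R / (n - j)%:R * x) by field; rewrite !lt0r_neq0.
  move=> ->; apply: ler_wpM2l; first by rewrite divr_ge0 ?ltW.
  exact: (sup_upper_bound hS (key x Sx)).
rewrite /C_exact -/S -/S'.
apply: (le_trans (ler_wpM2l _ le1)); first by rewrite divr_ge0 ?ltW.
rewrite mulrA (_ : n%:R / (n - j)%:R * ((n - j)%:R / n%:R) = 1 :> R) ?mul1r //.
by field; rewrite !lt0r_neq0.
Qed.
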